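(* Let $F:\mathbb{R}^p\to\mathbb{R}^p$ be single-valued and $L$-Lipschitz continuous, $T:\mathbb{R}^p\rightrightarrows\mathbb{R}^p$, and suppose $\Phi:=F+T$ is maximally monotone. Let $\eta>0$ and let $\{(x^k,y^k)\}$ be generated by: start from $x^0\in\mathrm{dom}\,\Phi$, set $x^{-1}:=x^0$, and for $k\ge0$ $$y^k:=2x^k-x^{k-1},\qquad x^{k+1}:=J_{\eta T}(x^k-\eta Fy^k).$$ For $k\ge1$ let $\xi^k:=\frac1\eta(x^{k-1}-x^k)-Fy^{k-1}\in Tx^k$. Then for every $k\ge1$, $$\|Fx^k+\xi^k\|^2\le\frac{5L^2\eta^2+3}{3\eta^2}\|x^k-y^k\|^2+\frac{5L^2\eta^2+3}{5\eta^2}\|x^k-y^{k-1}\|^2.$$ Moreover, if $\sqrt2L\eta<1$, then with $\omega:=\frac{2L^2\eta^2}{1-2L^2\eta^2}>0$, for every $k\ge1$, $$\begin{aligned}\|Fx^{k+1}+\xi^{k+1}\|^2+\omega\|Fx^{k+1}-Fy^k\|^2\le{}&\|Fx^k+\xi^k\|^2+\omega\|Fx^k-Fy^{k-1}\|^2\\&-\Big(\frac{1-4L^2\eta^2}{1-2L^2\eta^2}\Big)\|Fy^k-Fx^k+\xi^{k+1}-\xi^k\|^2.\end{aligned}$$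
   Context: $J_{\eta T}:=(\mathbb{I}+\eta T)^{-1}$ is the resolvent of $\eta T$. $F$ is $L$-Lipschitz if $\|Fx-Fy\|\le L\|x-y\|$. *)

(* Defs.v *)
(* R^p is 'rV[R]_p over a real closed field R, with the
   Euclidean inner product and norm. Set-valued operators are relations
   T : 'rV_p -> 'rV_p -> Prop, where "T x u" means u \in T x. *)
From HB Require Import structures.
From mathcomp Require Import all_boot all_order all_algebra.
Set Implicit Arguments. Unset Strict Implicit. Unset Printing Implicit Defensive.
Import Order.TTheory GRing.Theory Num.Theory.
Local Open Scope ring_scope.

Section Defs.
Variables (R : rcfType) (p : nat).
Notation V := 'rV[R]_p.

Definition dotp (u v : V) : R := \sum_(i < p) u ord0 i * v ord0 i.
Definition enorm (u : V) : R := Num.sqrt (dotp u u).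

Definition Lipschitz (F : V -> V) (L : R) : Prop :=
  forall x y, enorm (F x - F y) <= L * enorm (x - y).

Definition opsum (F : V -> V) (T : V -> V -> Prop) : V -> V -> Prop :=
  fun x w => exists u, T x u /\ w = F x + u.

Definition monotone_op (S : V -> V -> Prop) : Prop :=
  forall x u y v, S x u -> S y v -> 0 <= dotp (x - y) (u - v).

Definition maximally_monotone (S : V -> V -> Prop) : Prop :=
  monotone_op S /\
  forall S' : V -> V -> Prop, monotone_op S' ->
    (forall x u, S x u -> S' x u) -> forall x u, S' x u -> S x u.

Definition dom (S : V -> V -> Prop) (x : V) : Prop := exists u, S x u.

(* resolvent J_{eta T} = (I + eta T)^{-1}: "resolvent eta T z x" means x \in J_{eta T} z *)
Definition resolvent (eta : R) (T : V -> V -> Prop) (z x : V) : Prop :=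
  exists u, T x u /\ z = x + eta *: u.

(* y^k := 2 x^k - x^{k-1}, with the convention x^{-1} := x^0 (k.-1 = 0 for k = 0) *)
Definition yseq (x : nat -> V) (k : nat) : V := 2%:R *: x k - x k.-1.

Definition xiseq (F : V -> V) (eta : R) (x : nat -> V) (k : nat) : V :=
  eta^-1 *: (x k.-1 - x k) - F (yseq x k.-1).

End Defs.

(* Main.v *)
Require Import Defs.
From HB Require Import structures.
From mathcomp Require Import all_boot all_order all_algebra.
From mathcomp Require Import ring lra.
Import Order.TTheory GRing.Theory Num.Theory.
Set Implicit Arguments. Unset Strict Implicit.
Local Open Scope ring_scope.

Section H.
Variables (R : rcfType) (p : nat).
Notation V := 'rV[R]_p.
Implicit Types u v w : V.

Lemma dotpC u v : dotp u v = dotp v u.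
Proof. by rewrite /dotp; apply: eq_bigr => i _; rewrite mulrC. Qed.
Lemma dotpDl u v w : dotp (u + v) w = dotp u w + dotp v w.
Proof. by rewrite /dotp -big_split; apply: eq_bigr => i _; rewrite mxE mulrDl. Qed.
Lemma dotpZl (a : R) u v : dotp (a *: u) v = a * dotp u v.
Proof. by rewrite /dotp mulr_sumr; apply: eq_bigr => i _; rewrite mxE mulrA. Qed.
Lemma dotpNl u v : dotp (- u) v = - dotp u v.
Proof. by rewrite /dotp -sumrN; apply: eq_bigr => i _; rewrite mxE mulNr. Qed.
Lemma dotpBl u v w : dotp (u - v) w = dotp u w - dotp v w.
Proof. by rewrite dotpDl dotpNl. Qed.
Lemma dotpDr u v w : dotp u (v + w) = dotp u v + dotp u w.
Proof. by rewrite dotpC dotpDl !(dotpC u). Qed.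
Lemma dotpZr (a : R) u v : dotp u (a *: v) = a * dotp u v.
Proof. by rewrite dotpC dotpZl dotpC. Qed.
Lemma dotpBr u v w : dotp u (v - w) = dotp u v - dotp u w.
Proof. by rewrite dotpC dotpBl !(dotpC u). Qed.
Lemma dotpp_ge0 u : 0 <= dotp u u.
Proof. by apply: sumr_ge0 => i _; rewrite -expr2 sqr_ge0. Qed.
Lemma enorm_sq u : enorm u ^+ 2 = dotp u u.
Proof. by rewrite /enorm sqr_sqrtr // dotpp_ge0. Qed.
Lemma enorm_ge0 u : 0 <= enorm u.
Proof. exact: sqrtr_ge0. Qed.
Lemma dotpp_eq0 u : dotp u u = 0 -> u = 0.
Proof.
move=> H; apply/rowP => j; rewrite mxE.
have h0 : forall i : 'I_p, xpredT i -> 0 <= u ord0 i * u ord0 i.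
  by move=> i _; rewrite -expr2 sqr_ge0.
have := @psumr_eq0P R _ xpredT (fun i => u ord0 i * u ord0 i) h0 H j isT.
by rewrite ord1 => /eqP; rewrite mulf_eq0 orbb => /eqP.
Qed.
Lemma dotp0l v : dotp 0 v = 0.
Proof. by rewrite -(scale0r 0) dotpZl mul0r. Qed.
Lemma CS u v : dotp u v ^+ 2 <= dotp u u * dotp v v.
Proof.
have [A0|] := eqVneq (dotp u u) 0.
  by rewrite (dotpp_eq0 A0) !dotp0l expr0n /= mul0r.
move=> An0.
have Ap : 0 < dotp u u by rewrite lt_def An0 dotpp_ge0.
have := dotpp_ge0 (dotp u u *: v - dotp u v *: u).
rewrite !dotpBl !dotpBr !dotpZl !dotpZr (dotpC v u) => h.
have : 0 <= dotp u u * (dotp u u * dotp v v - dotp u v ^+ 2) by nra.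
by rewrite pmulr_rge0 // subr_ge0.
Qed.
Lemma nsqD u v : dotp (u + v) (u + v) = dotp u u + 2%:R * dotp u v + dotp v v.
Proof. rewrite dotpDl !dotpDr (dotpC v u); ring. Qed.
Lemma nsqB u v : dotp (u - v) (u - v) = dotp u u - 2%:R * dotp u v + dotp v v.
Proof. rewrite dotpBl !dotpBr (dotpC v u); ring. Qed.
Lemma nsqZ (c : R) u : dotp (c *: u) (c *: u) = c ^+ 2 * dotp u u.
Proof. rewrite dotpZl dotpZr; ring. Qed.
End H.
Lemma sc1 (R : rcfType) (A C E X eta L : R) : 0 < eta -> 0 <= A -> 0 <= C -> 0 <= E ->
  E <= L ^+ 2 * C -> X ^+ 2 <= A * E ->
  eta^-1 ^+ 2 * A + 2%:R * (eta^-1 * X) + E <=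
   (5%:R * L ^+ 2 * eta ^+ 2 + 3%:R) / (3%:R * eta ^+ 2) * A
     + (5%:R * L ^+ 2 * eta ^+ 2 + 3%:R) / (5%:R * eta ^+ 2) * C.
Proof.
move=> he hA hC hE hEC hX.
set s := L ^+ 2 * eta ^+ 2.
have s0 : 0 <= s by rewrite /s mulr_ge0 // sqr_ge0.
have h1 : eta ^+ 2 * E <= s * C.
  by rewrite /s -mulrA mulrCA ler_wpM2l // sqr_ge0.
have h2 : (eta * X) ^+ 2 <= s * A * C.
  rewrite exprMn; apply: (le_trans (y := eta ^+ 2 * (A * E))).
    by rewrite ler_wpM2l // sqr_ge0.
  have : A * E <= A * (L ^+ 2 * C) by rewrite ler_wpM2l.
  rewrite /s => h; nra.
have h3 : 2%:R * (eta * X) <= 5%:R / 3%:R * s * A + 3%:R / 5%:R * C.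
  set P := 5%:R / 3%:R * s * A; set Q := 3%:R / 5%:R * C.
  have P0 : 0 <= P by rewrite /P; apply: mulr_ge0 => //; apply: mulr_ge0 => //; apply: divr_ge0.
  have Q0 : 0 <= Q by rewrite /Q; apply: mulr_ge0 => //; apply: divr_ge0.
  have PQ : P * Q = s * A * C by rewrite /P /Q; field.
  case: (lerP (2%:R * (eta * X)) (P + Q)) => // h.
  have h4 : (P + Q) ^+ 2 < (2%:R * (eta * X)) ^+ 2.
    have hp : 0 <= 2%:R * (eta * X) := le_trans (addr_ge0 P0 Q0) (ltW h).
    by rewrite ltr_pXn2r // nnegrE ?addr_ge0.
  have h5 : 0 <= (P - Q) ^+ 2 by apply: sqr_ge0.
  nra.
have ne : eta != 0 by rewrite gt_eqF.
rewrite -subr_ge0.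
have -> : (5%:R * L ^+ 2 * eta ^+ 2 + 3%:R) / (3%:R * eta ^+ 2) * A +
   (5%:R * L ^+ 2 * eta ^+ 2 + 3%:R) / (5%:R * eta ^+ 2) * C -
   (eta^-1 ^+ 2 * A + 2%:R * (eta^-1 * X) + E)
   = (5%:R / 3%:R * s * A + 3%:R / 5%:R * C - 2%:R * (eta * X)
      + (s * C - eta ^+ 2 * E)) / eta ^+ 2.
  by rewrite /s; field.
apply: divr_ge0; last exact: sqr_ge0.
lra.
Qed.

Lemma sc2 (R : rcfType) (L eta W we1 wg0 G0 E1 E0 D de0 omega : R) :
  2%:R * L ^+ 2 * eta ^+ 2 < 1 ->
  W + we1 - wg0 <= 0 -> D = W - 2%:R * wg0 + G0 ->
  E1 <= L ^+ 2 * (eta ^+ 2 * (D + 2%:R * de0 + E0)) -> 0 <= D - 2%:R * de0 + E0 ->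
  omega = (2%:R * L ^+ 2 * eta ^+ 2) / (1 - 2%:R * L ^+ 2 * eta ^+ 2) ->
  (W + 2%:R * we1 + E1) + omega * E1 <= G0 + omega * E0
     - (1 - 4%:R * L ^+ 2 * eta ^+ 2) / (1 - 2%:R * L ^+ 2 * eta ^+ 2) * D.
Proof.
move=> hs hM hD hL hP {omega}->.
have s0 : 0 <= L ^+ 2 * eta ^+ 2 by rewrite mulr_ge0 // sqr_ge0.
rewrite -[2%:R * _ * _]mulrA -[4%:R * _ * _]mulrA in hs *.
rewrite mulrA in hL.
move: hs hL s0; set s := L ^+ 2 * eta ^+ 2 => hs hL s0.
set omega := _ / _.
have ds : 0 < 1 - 2%:R * s by rewrite subr_gt0.
have dsn : 1 - 2%:R * s != 0 by rewrite gt_eqF.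
have om0 : 0 <= omega.
  by apply: divr_ge0; [rewrite mulr_ge0 | exact: ltW].
have hc : (1 - 4%:R * s) / (1 - 2%:R * s) = 1 - omega.
  by rewrite /omega; field.
have ho : (1 + omega) * s = omega / 2%:R.
  by rewrite /omega; field.
rewrite hc.
have : (1 + omega) * E1 <= (1 + omega) * (s * (D + 2%:R * de0 + E0)).
  by rewrite ler_wpM2l // addr_ge0.
rewrite mulrA ho => h.
have : omega / 2%:R * (D + 2%:R * de0 + E0) <= omega / 2%:R * (2%:R * D + 2%:R * E0).
  by rewrite ler_wpM2l ?divr_ge0 //; lra.
have -> : omega / 2%:R * (2%:R * D + 2%:R * E0) = omega * D + omega * E0 by field.
move=> h'.
lra.
Qed.

Theorem lemma8 (R : rcfType) (p : nat) (F : 'rV[R]_p -> 'rV[R]_p)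
  (T : 'rV[R]_p -> 'rV[R]_p -> Prop) (L eta : R) (x : nat -> 'rV[R]_p) :
  Lipschitz F L ->
  maximally_monotone (opsum F T) ->
  0 < eta ->
  dom (opsum F T) (x 0%N) ->
  (forall k : nat,
     resolvent eta T (x k - eta *: F (yseq x k)) (x k.+1)) ->
  (forall k : nat, (1 <= k)%N ->
     enorm (F (x k) + xiseq F eta x k) ^+ 2 <=
       (5%:R * L ^+ 2 * eta ^+ 2 + 3%:R) / (3%:R * eta ^+ 2)
         * enorm (x k - yseq x k) ^+ 2
     + (5%:R * L ^+ 2 * eta ^+ 2 + 3%:R) / (5%:R * eta ^+ 2)
         * enorm (x k - yseq x k.-1) ^+ 2)
  /\
  (Num.sqrt 2%:R * L * eta < 1 ->
   let omega := (2%:R * L ^+ 2 * eta ^+ 2) / (1 - 2%:R * L ^+ 2 * eta ^+ 2) in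
   forall k : nat, (1 <= k)%N ->
     enorm (F (x k.+1) + xiseq F eta x k.+1) ^+ 2
       + omega * enorm (F (x k.+1) - F (yseq x k)) ^+ 2
     <= enorm (F (x k) + xiseq F eta x k) ^+ 2
       + omega * enorm (F (x k) - F (yseq x k.-1)) ^+ 2
       - (1 - 4%:R * L ^+ 2 * eta ^+ 2) / (1 - 2%:R * L ^+ 2 * eta ^+ 2)
         * enorm (F (yseq x k) - F (x k) + xiseq F eta x k.+1 - xiseq F eta x k) ^+ 2).
Proof.
move=> HL [Hmon _] Heta _ Hres.
have ne : eta != 0 by rewrite gt_eqF.
have Hxi : forall k, T (x k.+1) (xiseq F eta x k.+1).
  move=> k; case: (Hres k) => u [Tu Heq].
  suff -> : xiseq F eta x k.+1 = u by [].
  apply/rowP => j; have := congr1 (fun M : 'rV_p => M ord0 j) Heq.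
  rewrite /xiseq /= !mxE => Hj.
  have -> : x k.+1 ord0 j = x k ord0 j - eta * F (yseq x k) ord0 j - eta * u ord0 j by lra.
  by field.
have Hphi : forall k, opsum F T (x k.+1) (F (x k.+1) + xiseq F eta x k.+1).
  by move=> k; exists (xiseq F eta x k.+1); split.
have Lsq : forall a b, dotp (F a - F b) (F a - F b) <= L ^+ 2 * dotp (a - b) (a - b).
  move=> a b; rewrite -!enorm_sq; have h := HL a b.
  have h0 := enorm_ge0 (F a - F b); have h1 := enorm_ge0 (a - b); nra.
split.
  case=> [|k] // _.
  change (k.+1.-1) with k.
  set a := x k.+1 - yseq x k.+1.
  set e0 := F (x k.+1) - F (yseq x k).
  have HI : F (x k.+1) + xiseq F eta x k.+1 = eta^-1 *: a + e0.
    by rewrite /a /e0 /xiseq /yseq /=; apply/rowP => j; rewrite !mxE; field.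
  rewrite HI !enorm_sq (nsqD (eta^-1 *: a) e0) nsqZ dotpZl.
  have := sc1 Heta (dotpp_ge0 a) (dotpp_ge0 (x k.+1 - yseq x k)) (dotpp_ge0 e0)
    (Lsq _ _) (CS a e0).
  move=> h; lra.
move=> Hs omega [|k] // _.
change (k.+1.-1) with k.
have [L0|Lneg] := leP 0 L; last first.
  have Zn : forall v : 'rV[R]_p, enorm v = 0.
    move=> v; have := HL v 0; rewrite !subr0 => h.
    have h0 := enorm_ge0 (F v - F 0); have h1 := enorm_ge0 v.
    have h2 : enorm v <= 0 by nra.
    by apply/eqP; rewrite eq_le h2 h1.
  rewrite !Zn; lra.
have hs : 2%:R * L ^+ 2 * eta ^+ 2 < 1.
  have t0 : 0 <= Num.sqrt 2%:R * L * eta by rewrite !mulr_ge0 // ?sqrtr_ge0 // ltW.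
  have : (Num.sqrt 2%:R * L * eta) ^+ 2 < 1 by nra.
  by rewrite !exprMn sqr_sqrtr ?ler0n.
pose w := xiseq F eta x k.+2 + F (yseq x k.+1).
pose e1 := F (x k.+2) - F (yseq x k.+1).
pose g0 := F (x k.+1) + xiseq F eta x k.+1.
pose e0 := F (x k.+1) - F (yseq x k).
pose d := F (yseq x k.+1) - F (x k.+1) + xiseq F eta x k.+2 - xiseq F eta x k.+1.
have I1 : x k.+2 - x k.+1 = (- eta) *: w.
  by rewrite /w /xiseq /yseq /=; apply/rowP => j; rewrite !mxE; field.
have I2 : F (x k.+2) + xiseq F eta x k.+2 = w + e1.
  by rewrite /w /e1; apply/rowP => j; rewrite !mxE; ring.
have I3 : d = w - g0.
  by rewrite /d /w /g0; apply/rowP => j; rewrite !mxE; ring.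
have I4 : x k.+2 - yseq x k.+1 = (- eta) *: (d + e0).
  by rewrite /d /e0 /xiseq /yseq /=; apply/rowP => j; rewrite !mxE; field.
have hM := Hmon _ _ _ _ (Hphi k.+1) (Hphi k).
rewrite I1 I2 -/g0 dotpZl dotpBr dotpDr mulNr oppr_ge0 pmulr_rle0 // in hM.
have hL := Lsq (x k.+2) (yseq x k.+1).
rewrite -/e1 I4 nsqZ (nsqD d e0) sqrrN in hL.
have hP := dotpp_ge0 (d - e0); rewrite nsqB in hP.
have hD : dotp d d = dotp w w - 2%:R * dotp w g0 + dotp g0 g0 by rewrite I3 nsqB.
rewrite I2 -/g0 -/e0 -/e1 -/d !enorm_sq (nsqD w e1).
have := sc2 hs hM hD hL hP (erefl omega).
move=> h; lra.
Qed.
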